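(* Let $D$ be a fixed integer which is not a perfect square and let $\mathcal{Q}$ denote the set of squares in $\mathbb{Q}$. For every $\varepsilon>0$ and $N\geq 1$, \[ \#\{(A,B)\in\mathbb{Z}^2:\ |A|,|B|\leq N,\ -AB\in\mathcal{Q}\}\ll_\varepsilon N^{1+\varepsilon}, \] and \[ \#\{(A,B)\in\mathbb{Z}^2:\ |A|,|B|\leq N,\ D\big((A+B-1)^2-4AB\big)\in\mathcal{Q}\}\ll_\varepsilon |D|^{\varepsilon}N^{1+\varepsilon}. \] *)

(* Defs.v *)
From Stdlib Require Import ZArith QArith Reals List ClassicalEpsilon.
Import ListNotations.

Definition is_rat_square (x : Z) : Prop :=
  exists q : Q, Qeq (q * q) (inject_Z x).

Definition is_int_square (D : Z) : Prop := exists k : Z, (k * k)%Z = D.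

Definition Zrange (N : nat) : list Z :=
  map (fun k => (Z.of_nat k - Z.of_nat N)%Z) (seq 0 (2 * N + 1)).

Definition box (N : nat) : list (Z * Z) := list_prod (Zrange N) (Zrange N).

Definition decP (P : Prop) : bool :=
  if excluded_middle_informative P then true else false.

Definition count_box (N : nat) (P : Z -> Z -> Prop) : nat :=
  length (filter (fun p => decP (P (fst p) (snd p))) (box N)).

(* Main.v *)
Require Import Defs.
From Stdlib Require Import ZArith QArith Reals List Znumtheory Lia Lra Classical ClassicalEpsilon FunctionalExtensionality.
From Stdlib Require FinFun.
Import ListNotations.

Open Scope Z_scope.

Lemma sq_div (a b : Z) : (a*a | b*b) -> (a | b).
Proof.
  intros H.
  destruct (Z.eq_dec a 0) as [->|Ha].
  - destruct H as [q Hq]. assert (b = 0) by nia. subst. apply Z.divide_refl.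
  - set (g := Z.gcd a b).
    assert (Hg : 0 < g). { pose proof (Z.gcd_nonneg a b). assert (g <> 0).
      { intro E. apply Z.gcd_eq_0_l in E. contradiction. } unfold g in *; lia. }
    destruct (Z.gcd_divide_l a b) as [a' Ea]. destruct (Z.gcd_divide_r a b) as [b' Eb].
    fold g in Ea, Eb.
    assert (Hc : Z.gcd a' b' = 1).
    { pose proof (Z.gcd_div_gcd a b g ltac:(lia) eq_refl) as E.
      assert (E1 : a / g = a') by (rewrite Ea; apply Z.div_mul; lia).
      assert (E2 : b / g = b') by (rewrite Eb; apply Z.div_mul; lia).
      rewrite E1, E2 in E. exact E. }
    assert (H2 : (a' * a' | b' * b')).
    { apply (Z.mul_divide_cancel_r _ _ (g*g)). lia.
      replace (a' * a' * (g * g)) with (a*a) by (rewrite Ea; ring).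
      replace (b' * b' * (g * g)) with (b*b) by (rewrite Eb; ring). exact H. }
    assert (H3 : (a' | b' * b')). { eapply Z.divide_trans; [|exact H2]. exists a'. ring. }
    apply Z.gauss in H3; [|exact Hc].
    rewrite Ea, Eb. apply Z.mul_divide_mono_r. exact H3.
Qed.

Lemma div_sq_mul (D a b : Z) : (D | a*a) -> (D | b*b) -> (D | a*b).
Proof.
  intros [p Hp] [q Hq]. apply sq_div. exists (p*q).
  replace (a*b*(a*b)) with ((a*a)*(b*b)) by ring. rewrite Hp, Hq. ring.
Qed.

Lemma min_ex (P : Z -> Prop) : forall n, 0 <= n -> 0 < n -> P n ->
  exists r, 0 < r /\ P r /\ forall m, 0 < m -> P m -> r <= m.
Proof.
  intros n Hn. pattern n. apply Z_lt_induction; [|exact Hn].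
  intros x IH Hx Px.
  destruct (classic (exists y, 0 < y < x /\ P y)) as [[y [Hy Py]]|Hno].
  - apply (IH y); lia || auto.
  - exists x. split; [lia|]. split; [exact Px|].
    intros m Hm Pm. destruct (Z_lt_le_dec m x); [|lia].
    exfalso. apply Hno. exists m. split; [lia|exact Pm].
Qed.

Lemma root_gen (D : Z) : D <> 0 ->
  exists r, 0 < r /\ (D | r*r) /\ forall m, (D | m*m) -> (r | m).
Proof.
  intros HD.
  destruct (min_ex (fun r => (D | r*r)) (Z.abs D) ltac:(lia) ltac:(lia)) as [r [Hr [Pr Hmin]]].
  { exists (D * (Z.sgn D * Z.sgn D)). destruct (Z.abs_spec D) as [[? E]|[? E]]; rewrite E;
    destruct (Z.sgn_spec D) as [[? E2]|[[? E2]|[? E2]]]; rewrite ?E2; lia. }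
  exists r. split; [exact Hr|]. split; [exact Pr|].
  intros m Hm.
  pose proof (Z.mod_pos_bound m r Hr) as Hb.
  pose proof (Z.div_mod m r ltac:(lia)) as Hdm.
  set (q := m / r) in *. set (rm := m mod r) in *.
  assert (Hrm : (D | rm * rm)).
  { assert (E : rm = m - r * q) by lia. rewrite E.
    assert (Hmr : (D | m * r)) by (apply div_sq_mul; auto).
    replace ((m - r*q)*(m - r*q)) with (m*m - 2*q*(m*r) + q*q*(r*r)) by ring.
    apply Z.divide_add_r; [apply Z.divide_sub_r|].
    - exact Hm.
    - apply Z.divide_mul_r. exact Hmr.
    - apply Z.divide_mul_r. exact Pr. }
  destruct (Z.eq_dec rm 0) as [E|E].
  - exists q. lia.
  - exfalso. specialize (Hmin rm ltac:(lia) Hrm). lia.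
Qed.

Lemma rat_sq_int (n : Z) : is_rat_square n -> exists e, e*e = n.
Proof.
  intros [[p d] Hq]. unfold Qeq in Hq. simpl in Hq.
  rewrite Pos2Z.inj_mul in Hq.
  set (dd := Z.pos d) in *.
  assert (Hd : (dd*dd | p*p)). { exists n. lia. }
  apply sq_div in Hd. destruct Hd as [e He].
  exists e. subst p. assert (0 < dd) by (unfold dd; lia).
  apply (Z.mul_cancel_r _ _ (dd*dd)); [nia|]. nia.
Qed.
Open Scope Z_scope.

Lemma inj_count {A B : Type} (R : A -> B -> Prop) (L : list B) :
  (forall a a' b, R a b -> R a' b -> a = a') ->
  forall l : list A, NoDup l -> (forall a, In a l -> exists b, In b L /\ R a b) ->
  exists l', length l' = length l /\ NoDup l' /\ incl l' L /\
    (forall b, In b l' -> exists a, In a l /\ R a b).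
Proof.
  intros Hinj l. induction l as [|a l IH]; intros Hnd Hcov.
  - exists []. split; [reflexivity|]. split; [apply NoDup_nil|]. split; [intros x []|]. intros b [].
  - inversion Hnd; subst.
    destruct IH as [l' [K1 [K2 [K3 H4]]]]; auto.
    { intros x Hx. apply Hcov. right. exact Hx. }
    destruct (Hcov a (or_introl eq_refl)) as [b [Hb Rb]].
    exists (b :: l'). repeat split.
    + simpl. lia.
    + constructor; auto. intro Hin. destruct (H4 b Hin) as [a' [Ha' Ra']].
      assert (a = a') by (eapply Hinj; eauto). subst. contradiction.
    + intros x [<-|Hx]; auto.
    + intros x [<-|Hx]. exists a; split; auto. left; auto.
      destruct (H4 x Hx) as [a' [? ?]]. exists a'; split; auto. right; auto.
Qed.

Lemma inj_len {A B : Type} (R : A -> B -> Prop) (L : list B) (l : list A) :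
  (forall a a' b, R a b -> R a' b -> a = a') -> NoDup l ->
  (forall a, In a l -> exists b, In b L /\ R a b) -> (length l <= length L)%nat.
Proof.
  intros Hinj Hnd Hcov. destruct (inj_count R L Hinj l Hnd Hcov) as [l' [E [N' [I _]]]].
  rewrite <- E. apply NoDup_incl_length; auto.
Qed.

Lemma NoDup_prod {A B : Type} (l : list A) (l' : list B) :
  NoDup l -> NoDup l' -> NoDup (list_prod l l').
Proof.
  induction l as [|a l IH]; intros H1 H2; simpl. constructor.
  inversion H1; subst. apply NoDup_app.
  - apply FinFun.Injective_map_NoDup; auto. intros x y E. injection E; auto.
  - apply IH; auto.
  - intros [x y] Hx Hy. apply in_map_iff in Hx. destruct Hx as [z [E _]]. injection E as <- <-.
    apply in_prod_iff in Hy. destruct Hy. contradiction.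
Qed.

Lemma in_Zrange (N : nat) z : In z (Zrange N) <-> - Z.of_nat N <= z <= Z.of_nat N.
Proof.
  unfold Zrange. rewrite in_map_iff. split.
  - intros [k [<- Hk]]. apply in_seq in Hk. lia.
  - intros H. exists (Z.to_nat (z + Z.of_nat N)). split. lia. apply in_seq. lia.
Qed.

Lemma NoDup_box N : NoDup (box N).
Proof.
  unfold box. assert (NoDup (Zrange N)).
  { unfold Zrange. apply FinFun.Injective_map_NoDup. intros x y E. lia. apply seq_NoDup. }
  apply NoDup_prod; auto.
Qed.

Lemma in_box N A B : In (A,B) (box N) <-> Z.abs A <= Z.of_nat N /\ Z.abs B <= Z.of_nat N.
Proof. unfold box. rewrite in_prod_iff, !in_Zrange. lia. Qed.

Lemma decP_true P : decP P = true -> P.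
Proof. unfold decP. destruct (excluded_middle_informative P); auto. discriminate. Qed.

Lemma count_le {T : Type} (N : nat) (P : Z -> Z -> Prop) (R : Z * Z -> T -> Prop) (L : list T) :
  (forall a a' b, R a b -> R a' b -> a = a') ->
  (forall A B, Z.abs A <= Z.of_nat N -> Z.abs B <= Z.of_nat N -> P A B -> exists b, In b L /\ R (A,B) b) ->
  (count_box N P <= length L)%nat.
Proof.
  intros Hinj Hcov. unfold count_box. apply (inj_len R); auto.
  apply NoDup_filter, NoDup_box.
  intros [A B] H. apply filter_In in H. destruct H as [H1 H2]. apply in_box in H1.
  apply decP_true in H2. apply Hcov; tauto.
Qed.

Definition Zseq (lo : Z) (n : nat) : list Z := map (fun i => lo + Z.of_nat i) (seq 0 n).

Lemma Zseq_len lo n : length (Zseq lo n) = n.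
Proof. unfold Zseq. rewrite length_map, length_seq. reflexivity. Qed.

Lemma in_Zseq lo n t : In t (Zseq lo n) <-> lo <= t < lo + Z.of_nat n.
Proof.
  unfold Zseq. rewrite in_map_iff. split.
  - intros [k [<- Hk]]. apply in_seq in Hk. lia.
  - intros H. exists (Z.to_nat (t - lo)). split. lia. apply in_seq. lia.
Qed.

Lemma Zseq_S lo n : Zseq lo (S n) = Zseq lo n ++ [lo + Z.of_nat n].
Proof. unfold Zseq. rewrite seq_S, map_app. reflexivity. Qed.

Open Scope R_scope.

Definition Rsum {A : Type} (l : list A) (g : A -> R) : R := fold_right (fun a acc => g a + acc) 0 l.

Lemma Rsum_app {A} (l1 l2 : list A) g : Rsum (l1 ++ l2) g = Rsum l1 g + Rsum l2 g.
Proof. induction l1; simpl; [lra|]. unfold Rsum in *. simpl. rewrite IHl1. lra. Qed.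

Lemma Rsum_le {A} (l : list A) g h : (forall x, In x l -> g x <= h x) -> Rsum l g <= Rsum l h.
Proof. induction l; simpl; intros H; [lra|]. unfold Rsum in *; simpl.
  pose proof (H a (or_introl eq_refl)). pose proof (IHl (fun x Hx => H x (or_intror Hx))). lra. Qed.

Lemma Rsum_lin {A} (l : list A) g a b : Rsum l (fun x => a * g x + b) = a * Rsum l g + b * INR (length l).
Proof. induction l; unfold Rsum in *; cbn [fold_right length]; [simpl; lra|]. rewrite IHl, S_INR. lra. Qed.

Lemma Rsum_flat {A B} (l : list A) (h : A -> list B) g : Rsum (flat_map h l) g = Rsum l (fun a => Rsum (h a) g).
Proof. induction l; simpl; [lra|]. rewrite Rsum_app, IHl. reflexivity. Qed.

Lemma flat_len {A B} (l : list A) (f : A -> list B) (g : A -> R) :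
  (forall a, In a l -> INR (length (f a)) <= g a) -> INR (length (flat_map f l)) <= Rsum l g.
Proof.
  induction l; simpl; intros H; [lra|]. rewrite length_app, plus_INR. unfold Rsum in *; simpl.
  pose proof (H a (or_introl eq_refl)). pose proof (IHl (fun x Hx => H x (or_intror Hx))). lra.
Qed.

Lemma ln_step (n : R) : 1 <= n -> / (n + 1) <= ln (n + 1) - ln n.
Proof.
  intros Hn.
  assert (H : 1 + ln (n / (n+1)) <= n / (n+1)).
  { pose proof (exp_ineq1_le (ln (n / (n+1)))). rewrite exp_ln in H. lra.
    apply Rdiv_lt_0_compat; lra. }
  assert (Em : ln n = ln (n / (n+1)) + ln (n+1)).
  { rewrite <- ln_mult. f_equal. field. lra. apply Rdiv_lt_0_compat; lra. lra. }
  assert (n / (n+1) = 1 - / (n+1)) by (field; lra). lra.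
Qed.

Lemma harm (n : nat) : (1 <= n)%nat -> Rsum (Zseq 1 n) (fun j => / IZR j) <= 1 + ln (INR n).
Proof.
  induction n as [|n IH]; intros Hn; [lia|].
  destruct (Nat.eq_dec n 0) as [->|Hn0].
  - simpl. unfold Rsum; simpl. rewrite ln_1. lra.
  - rewrite Zseq_S, Rsum_app. specialize (IH ltac:(lia)).
    unfold Rsum at 2; cbn [fold_right]. rewrite S_INR.
    assert (E : IZR (1 + Z.of_nat n) = INR n + 1) by (rewrite plus_IZR, <- INR_IZR_INZ; lra).
    rewrite E. assert (1 <= INR n) by (apply (le_INR 1); lia).
    pose proof (ln_step (INR n) H). lra.
Qed.

Lemma ln_le_pow (x eps : R) : 0 < x -> 0 < eps -> ln x <= Rpower x eps / eps.
Proof.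
  intros Hx He. unfold Rpower. pose proof (exp_ineq1_le (eps * ln x)).
  apply (Rmult_le_reg_l eps); auto. field_simplify; lra.
Qed.
Open Scope Z_scope.
Lemma dist_core s x t u M : s <> 0 -> 0 <= M -> 0 <= t <= u ->
  Z.abs (x*x - s*(t*t)) <= M -> Z.abs (x*x - s*(u*u)) <= M ->
  (u - t) * Z.abs x <= 3*M.
Proof.
  intros Hs HM Htu H1 H2.
  set (X := Z.abs x). assert (HX : X*X = x*x) by (unfold X; destruct (Z.abs_spec x) as [[_ ->]|[_ ->]]; ring).
  assert (0 <= X) by (unfold X; lia).
  set (k := u - t). set (w := u + t).
  assert (0 <= k) by (unfold k; lia). assert (k <= w) by (unfold k, w; lia).
  assert (Hsq : (k*X)*(k*X) <= 9*M*M).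
  { destruct (Z_lt_le_dec s 0) as [Hn|Hp].
    - assert (E0 : 0 <= u*u) by nia. assert (s*(u*u) <= - (u*u)) by nia.
      assert (0 <= x*x) by nia.
      assert (x*x <= M) by lia. assert (u*u <= M) by lia.
      assert (k <= u) by (unfold k; lia).
      assert (k*k <= u*u) by (apply Z.mul_le_mono_nonneg; lia).
      assert ((k*k)*(X*X) <= M*M) by (apply Z.mul_le_mono_nonneg; nia).
      nia.
    - assert (Hkw : s*(k*w) <= 2*M).
      { replace (k*w) with (u*u - t*t) by (unfold k, w; ring). lia. }
      destruct (Z_le_gt_dec (x*x) (2*M)) as [Hx|Hx].
      + assert (k*k <= k*w) by (apply Z.mul_le_mono_nonneg_l; lia).
        assert (0 <= k*w) by nia.
        assert (k*w <= s*(k*w)) by (assert (1 <= s) by lia; nia).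
        assert ((k*k)*(X*X) <= (2*M)*(2*M)) by (apply Z.mul_le_mono_nonneg; nia).
        nia.
      + assert (Hs1 : 1 <= s) by lia.
        assert (u*u <= w*w) by (apply Z.mul_le_mono_nonneg; unfold w; lia).
        assert (s*(u*u) <= s*(w*w)) by (apply Z.mul_le_mono_nonneg_l; lia).
        assert (Hw : x*x - M <= s*(w*w)) by lia.
        assert (0 <= k*k) by nia.
        assert (E1 : k*k*(x*x) <= 2*(k*k)*(x*x - M)).
        { replace (2*(k*k)*(x*x - M)) with (k*k*(2*(x*x-M))) by ring.
          apply Z.mul_le_mono_nonneg_l; lia. }
        assert (E2 : (k*k)*(x*x - M) <= (k*k)*(s*(w*w))) by (apply Z.mul_le_mono_nonneg_l; lia).
        assert (0 <= k*w) by (apply Z.mul_nonneg_nonneg; lia).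
        assert (0 <= s*(k*w)) by (apply Z.mul_nonneg_nonneg; lia).
        assert (E3 : (s*(k*w))*(s*(k*w)) <= (2*M)*(2*M)) by (apply Z.mul_le_mono_nonneg; lia).
        assert (E4 : (k*k)*(s*(w*w)) <= (s*(k*w))*(s*(k*w))).
        { replace ((s*(k*w))*(s*(k*w))) with (s * ((k*k)*(s*(w*w)))) by ring.
          assert (0 <= (k*k)*(s*(w*w))) by (apply Z.mul_nonneg_nonneg; [lia| apply Z.mul_nonneg_nonneg; nia]).
          set (Q := (k*k)*(s*(w*w))) in *. nia. }
        nia. }
  nia.
Qed.
Open Scope Z_scope.

Definition msq (n s : Z) : nat := Z.to_nat (Z.sqrt (n / s)).

Definition L1 (N : nat) : list (Z * (Z * (Z * Z))) :=
  list_prod [1; -1] (flat_map (fun s => map (pair s) (list_prod (Zseq 1 (msq (Z.of_nat N) s)) (Zseq 1 (msq (Z.of_nat N) s)))) (Zseq 1 N)).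

Definition L0 (N : nat) : list (Z * (Z * (Z * Z))) :=
  map (fun p => (0, (0, p))) (map (pair 0) (Zrange N) ++ map (fun a => (a, 0)) (Zrange N)).

Definition R1 (p : Z * Z) (q : Z * (Z * (Z * Z))) : Prop :=
  (q = (0, (0, p)) /\ fst p * snd p = 0) \/
  (exists g s c t, q = (g, (s, (c, t))) /\ (g = 1 \/ g = -1) /\
     fst p = g * s * (c * c) /\ snd p = - g * s * (t * t)).

Lemma R1_inj : forall a a' b, R1 a b -> R1 a' b -> a = a'.
Proof.
  intros [A B] [A' B'] q [[-> _]|[g [s [c [t [-> [Hg [E1 E2]]]]]]]] [[E _]|[g' [s' [c' [t' [E [Hg' [E1' E2']]]]]]]];
   simpl in *.
  - congruence.
  - injection E; intros; subst. lia.
  - injection E; intros; subst. lia.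
  - injection E; intros; subst. f_equal; lia.
Qed.

Lemma decomp (a e : Z) (b : Z) : 0 < a -> 0 < b -> a * b = e * e ->
  exists s c t, 1 <= s /\ 1 <= c /\ 1 <= t /\ a = s * (c*c) /\ b = s * (t*t).
Proof.
  intros Ha Hb Hab.
  destruct (root_gen a ltac:(lia)) as [r [Hr [[s' Hs'] Hdiv]]].
  destruct (Hdiv a ltac:(exists a; ring)) as [c Hc].
  destruct (Hdiv e ltac:(exists b; lia)) as [t0 Ht0].
  assert (Er : r = s' * c).
  { apply (Z.mul_cancel_l _ _ r); [lia|]. rewrite Hs'. rewrite Hc at 1. ring. }
  assert (Hc0 : 0 < c) by nia.
  assert (Hs0 : 0 < s') by nia.
  assert (Ea : a = s' * (c*c)) by (rewrite Hc, Er; ring).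
  assert (Eb : b = s' * (t0*t0)).
  { apply (Z.mul_cancel_l _ _ a); [lia|]. rewrite Hab, Ht0.
    transitivity (t0*t0*(r*r)); [ring|]. rewrite Hs'. ring. }
  exists s', c, (Z.abs t0). split; [lia|]. split; [lia|]. split.
  - destruct (Z.eq_dec t0 0); [subst; lia|lia].
  - split; [exact Ea|]. rewrite Eb. f_equal. destruct (Z.abs_spec t0) as [[_ ->]|[_ ->]]; ring.
Qed.

Lemma part1_len (N : nat) : (count_box N (fun A B => is_rat_square (- (A * B))%Z) <= length (L0 N ++ L1 N))%nat.
Proof.
  apply (count_le N _ R1); [exact R1_inj|].
  intros A B HA HB HP. apply rat_sq_int in HP. destruct HP as [e He].
  destruct (Z.eq_dec (A*B) 0) as [H0|H0].
  - exists (0, (0, (A, B))). split; [|left; simpl; auto].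
    apply in_or_app. left. unfold L0. apply (in_map (fun p => (0%Z,(0%Z,p)))). apply in_or_app.
    destruct (Z.eq_dec A 0) as [->|HA0].
    + left. apply in_map. apply in_Zrange. lia.
    + right. assert (B = 0) by nia. subst. apply (in_map (fun a => (a, 0))). apply in_Zrange. lia.
  - destruct (decomp (Z.abs A) e (Z.abs B)) as [s [c [t [Hs [Hc [Ht [Ea Eb]]]]]]]; try lia.
    { rewrite <- Z.abs_mul. nia. }
    set (g := Z.sgn A).
    assert (Hg : g = 1 \/ g = -1) by (unfold g; destruct (Z.sgn_spec A) as [[_ E]|[[_ E]|[_ E]]]; lia).
    exists (g, (s, (c, t))). split.
    + apply in_or_app. right. unfold L1. apply in_prod.
      { destruct Hg as [->| ->]; simpl; auto. }
      apply in_flat_map. exists s. split.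
      * apply in_Zseq. assert (1 <= c*c) by nia. assert (s*1 <= s*(c*c)) by (apply Z.mul_le_mono_nonneg_l; lia). lia.
      * apply in_map. assert (Hcs : c <= Z.sqrt (Z.of_nat N / s)).
        { apply Z.sqrt_le_square. apply Z.div_pos; lia. lia. apply Z.div_le_lower_bound; nia. }
        assert (Hts : t <= Z.sqrt (Z.of_nat N / s)).
        { apply Z.sqrt_le_square. apply Z.div_pos; lia. lia. apply Z.div_le_lower_bound; nia. }
        unfold msq. apply in_prod; apply in_Zseq; lia.
    + right. exists g, s, c, t. split; [reflexivity|]. split; [exact Hg|]. simpl.
      unfold g. destruct (Z.sgn_spec A) as [[? E]|[[? E]|[? E]]]; rewrite E.
      * split; [lia|]. assert (B < 0) by nia. lia.
      * lia.
      * split; [lia|]. assert (0 < B) by nia. lia.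
Qed.

Open Scope R_scope.

Lemma part1_bound (N : nat) : (1 <= N)%nat ->
  INR (count_box N (fun A B => is_rat_square (- (A * B))%Z)) <= 8 * INR N + 2 * INR N * ln (INR N).
Proof.
  intros HN. eapply Rle_trans. apply le_INR, part1_len.
  rewrite length_app, plus_INR.
  assert (E0 : length (L0 N) = (2 * (2 * N + 1))%nat).
  { unfold L0, Zrange. rewrite length_map, length_app, !length_map, length_seq. lia. }
  rewrite E0. unfold L1. rewrite length_prod. simpl (length [1%Z; (-1)%Z]).
  rewrite mult_INR.
  pose proof (flat_len (Zseq 1 N) (fun s => map (pair s) (list_prod (Zseq 1 (msq (Z.of_nat N) s)) (Zseq 1 (msq (Z.of_nat N) s))))
     (fun s => IZR (Z.of_nat N) * / IZR s)) as Hf.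
  assert (Hf' : INR (length (flat_map (fun s => map (pair s) (list_prod (Zseq 1 (msq (Z.of_nat N) s)) (Zseq 1 (msq (Z.of_nat N) s)))) (Zseq 1 N))) <= INR N * (1 + ln (INR N))).
  { eapply Rle_trans. apply Hf.
    - intros s Hs. apply in_Zseq in Hs. rewrite length_map, length_prod, !Zseq_len, mult_INR.
      unfold msq. rewrite !INR_IZR_INZ, Z2Nat.id by apply Z.sqrt_nonneg.
      rewrite <- mult_IZR.
      pose proof (Z.sqrt_spec (Z.of_nat N / s) ltac:(apply Z.div_pos; lia)) as [Hq _].
      pose proof (Z.mul_div_le (Z.of_nat N) s ltac:(lia)) as Hm.
      apply IZR_le in Hq. apply IZR_le in Hm. rewrite mult_IZR in Hm.
      assert (0 < IZR s) by (apply IZR_lt; lia).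
      apply (Rmult_le_reg_l (IZR s)); auto. field_simplify; [|lra]. nra.
    - unfold Rsum. fold (Rsum (Zseq 1 N) (fun s => IZR (Z.of_nat N) * / IZR s)).
      replace (Rsum (Zseq 1 N) (fun s => IZR (Z.of_nat N) * / IZR s)) with
        (Rsum (Zseq 1 N) (fun s => IZR (Z.of_nat N) * / IZR s + 0)).
      2:{ f_equal. apply functional_extensionality_dep. intros. lra. }
      rewrite (Rsum_lin _ (fun s => / IZR s)). rewrite <- INR_IZR_INZ.
      pose proof (harm N HN). pose proof (pos_INR N). nra. }
  assert (1 <= INR N) by (apply (le_INR 1); lia).
  rewrite Rmult_plus_distr_l in Hf'. rewrite plus_INR, mult_INR. simpl (INR 2). simpl (INR 1). rewrite mult_INR. simpl (INR 2). lra.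
Qed.
Open Scope Z_scope.

Definition G (s M x t : Z) : Prop := 0 <= t /\ Z.abs (x*x - s*(t*t)) <= M.

Definition u (s M x : Z) : Z :=
  match excluded_middle_informative (exists t, G s M x t) with
  | left H => proj1_sig (constructive_indefinite_description _ H)
  | right _ => 0
  end.

Lemma u_spec s M x t : G s M x t -> G s M x (u s M x).
Proof.
  intros H. unfold u. destruct (excluded_middle_informative _) as [H'|H'].
  - exact (proj2_sig (constructive_indefinite_description _ H')).
  - exfalso. apply H'. eauto.
Qed.

Definition K (M x : Z) : Z := if Z.eq_dec x 0 then M else 3*M / Z.abs x.

Definition tseq (s M x : Z) : list Z := Zseq (u s M x - K M x) (Z.to_nat (2 * K M x + 1)).

Lemma in_tseq s M x t : s <> 0 -> 0 <= M -> G s M x t -> In t (tseq s M x).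
Proof.
  intros Hs HM Ht. pose proof (u_spec _ _ _ _ Ht) as Hu.
  set (v := u s M x) in *.
  assert (Hd : Z.abs (t - v) <= K M x).
  { unfold K. destruct (Z.eq_dec x 0) as [->|Hx].
    - destruct Ht as [Ht1 Ht2]. destruct Hu as [Hu1 Hu2].
      assert (t <= M). { assert (t <= t*t) by nia. assert (t*t <= Z.abs s * (t*t)) by nia.
        rewrite Z.mul_0_r, Z.sub_0_l, Z.abs_opp, Z.abs_mul in Ht2. nia. }
      assert (v <= M). { assert (v <= v*v) by nia. assert (v*v <= Z.abs s * (v*v)) by nia.
        rewrite Z.mul_0_r, Z.sub_0_l, Z.abs_opp, Z.abs_mul in Hu2. nia. }
      lia.
    - apply Z.div_le_lower_bound; [lia|].
      destruct Ht as [Ht1 Ht2]. destruct Hu as [Hu1 Hu2].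
      destruct (Z_le_gt_dec t v).
      + pose proof (dist_core s x t v M Hs HM ltac:(lia) Ht2 Hu2). 
        rewrite (Z.abs_neq (t - v)) by lia. nia.
      + pose proof (dist_core s x v t M Hs HM ltac:(lia) Hu2 Ht2).
        rewrite (Z.abs_eq (t - v)) by lia. nia. }
  unfold tseq. apply in_Zseq. fold v. rewrite Z2Nat.id by lia. lia.
Qed.

Definition Xl (N : nat) : list Z := 0 :: flat_map (fun j => [j; -j]) (Zseq 1 (2 * N)).

Definition L2 (s M : Z) (N : nat) : list (Z * Z) := flat_map (fun x => map (pair x) (tseq s M x)) (Xl N).

Definition Del (A B : Z) : Z := ((A + B - 1) ^ 2 - 4 * A * B)%Z.

Definition R2 (s : Z) (p : Z * Z) (q : Z * Z) : Prop :=
  fst q = fst p - snd p /\ Del (fst p) (snd p) = s * (snd q * snd q).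

Lemma R2_inj s : forall a a' b, R2 s a b -> R2 s a' b -> a = a'.
Proof.
  intros [A B] [A' B'] [x t] [E1 E2] [E1' E2']. unfold Del in *. cbn [fst snd] in *.
  rewrite Z.pow_2_r in *.
  assert (HB : B' = A' - x) by lia. assert (HA : A = B + x) by lia. subst A B'.
  assert (B = A' - x) by nia. f_equal; lia.
Qed.

Lemma part2_len (N : nat) (D : Z) : ~ is_int_square D ->
  exists s, s <> 0 /\
  (count_box N (fun A B => is_rat_square (D * ((A + B - 1) ^ 2 - 4 * A * B))%Z)
     <= length (L2 s (4 * Z.of_nat N + 1) N))%nat.
Proof.
  intros Hns. assert (HD : D <> 0). { intro E. apply Hns. exists 0. lia. }
  destruct (root_gen D HD) as [r [Hr [[s Hs] Hdiv]]].
  exists s. split. { intro E. subst. lia. }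
  apply (count_le N _ (R2 s)); [apply R2_inj|].
  intros A B HA HB HP. apply rat_sq_int in HP. destruct HP as [e He].
  destruct (Hdiv e ltac:(exists (Del A B); unfold Del; lia)) as [t0 Ht0].
  assert (HDel : Del A B = s * (Z.abs t0 * Z.abs t0)).
  { apply (Z.mul_cancel_l _ _ D); [exact HD|]. unfold Del. rewrite <- He, Ht0.
    assert (Ea : Z.abs t0 * Z.abs t0 = t0 * t0) by (destruct (Z.abs_spec t0) as [[_ ->]|[_ ->]]; ring).
    rewrite Ea. transitivity (t0*t0*(r*r)); [ring|]. rewrite Hs. ring. }
  exists (A - B, Z.abs t0). split; [|split; simpl; auto].
  assert (HG : G s (4 * Z.of_nat N + 1) (A - B) (Z.abs t0)).
  { split; [lia|]. rewrite <- HDel. unfold Del. rewrite Z.pow_2_r.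
    replace ((A - B) * (A - B) - ((A + B - 1) * (A + B - 1) - 4 * A * B)) with (2*(A+B) - 1) by ring.
    lia. }
  unfold L2. apply in_flat_map. exists (A - B). split.
  - unfold Xl. destruct (Z.eq_dec (A - B) 0) as [E|E]; [left; auto|right].
    apply in_flat_map. exists (Z.abs (A - B)). split.
    + apply in_Zseq. lia.
    + destruct (Z.abs_spec (A - B)) as [[_ E']|[_ E']]; rewrite E'; simpl; [left|right;left]; lia.
  - apply in_map. apply in_tseq; auto. intro E; subst; lia. lia.
Qed.

Open Scope R_scope.

Lemma K_nonneg M x : (0 <= M)%Z -> (0 <= K M x)%Z.
Proof. intros. unfold K. destruct (Z.eq_dec x 0); [lia|]. apply Z.div_pos; lia. Qed.

Lemma ln2_lt_1 : ln 2 < 1.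
Proof.
  pose proof (exp_ineq1 1 ltac:(lra)).
  apply Rlt_le_trans with (ln (exp 1)); [apply ln_increasing; lra | rewrite ln_exp; lra].
Qed.

Lemma part2_bound (s : Z) (N : nat) : (1 <= N)%nat ->
  INR (length (L2 s (4 * Z.of_nat N + 1) N)) <= 135 * INR N + 60 * INR N * ln (INR N).
Proof.
  intros HN. set (M := (4 * Z.of_nat N + 1)%Z).
  assert (HM : (0 <= M)%Z) by (unfold M; lia).
  assert (HMr : IZR M = 4 * INR N + 1) by (unfold M; rewrite plus_IZR, mult_IZR, <- INR_IZR_INZ; reflexivity).
  assert (H1N : 1 <= INR N) by (apply (le_INR 1); lia).
  unfold L2. eapply Rle_trans.
  { apply (flat_len _ _ (fun x => IZR (2 * K M x + 1))).
    intros x _. rewrite length_map. unfold tseq. rewrite Zseq_len, INR_IZR_INZ, Z2Nat.id.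
    lra. pose proof (K_nonneg M x HM). lia. }
  unfold Xl. unfold Rsum at 1. cbn [fold_right]. fold (Rsum (flat_map (fun j => [j; (-j)%Z]) (Zseq 1 (2 * N))) (fun x => IZR (2 * K M x + 1))).
  rewrite Rsum_flat.
  assert (Hb : Rsum (Zseq 1 (2 * N)) (fun a => Rsum [a; (- a)%Z] (fun x => IZR (2 * K M x + 1)))
     <= Rsum (Zseq 1 (2 * N)) (fun j => (12 * IZR M) * / IZR j + 2)).
  { apply Rsum_le. intros j Hj. apply in_Zseq in Hj.
    unfold Rsum; cbn [fold_right].
    assert (Ek : forall y, y = j \/ y = (-j)%Z -> K M y = (3 * M / j)%Z).
    { intros y Hy. unfold K. destruct (Z.eq_dec y 0); [lia|]. f_equal. lia. }
    rewrite (Ek j), (Ek (-j)%Z) by auto.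
    pose proof (Z.mul_div_le (3*M) j ltac:(lia)) as Hm. apply IZR_le in Hm.
    rewrite !mult_IZR in Hm. rewrite !plus_IZR, !mult_IZR.
    assert (0 < IZR j) by (apply IZR_lt; lia).
    assert (IZR (3 * M / j) <= 3 * IZR M * / IZR j).
    { apply (Rmult_le_reg_l (IZR j)); auto. field_simplify; [|lra]. simpl in Hm |- *. lra. }
    lra. }
  rewrite Rsum_lin in Hb. rewrite Zseq_len in Hb.
  pose proof (harm (2 * N) ltac:(lia)) as Hh.
  rewrite mult_INR in Hh, Hb. simpl (INR 2) in Hh, Hb.
  rewrite ln_mult in Hh by lra.
  replace (1 + 1) with 2 in * by lra.
  pose proof ln2_lt_1.
  assert (0 <= ln (INR N)).
  { destruct (Rle_lt_or_eq_dec 1 (INR N) H1N) as [Hl|He].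
    - rewrite <- ln_1. left. apply ln_increasing; lra.
    - rewrite <- He, ln_1. lra. }
  assert (HK0 : IZR (2 * K M 0 + 1) = 2 * IZR M + 1).
  { unfold K. destruct (Z.eq_dec 0 0); [|congruence]. rewrite plus_IZR, mult_IZR. reflexivity. }
  rewrite HK0, HMr. rewrite HMr in Hb.
  assert (Hpos : 0 <= Rsum (Zseq 1 (2 * N)) (fun j => / IZR j)).
  { assert (E0 : Rsum (Zseq 1 (2 * N)) (fun _ => 0) = 0).
    { generalize (Zseq 1 (2 * N)). intro l. induction l as [|a l IH]; unfold Rsum in *; simpl; [lra|]. rewrite IH. lra. }
    rewrite <- E0. apply Rsum_le. intros j Hj. apply in_Zseq in Hj.
    left. apply Rinv_0_lt_compat, IZR_lt. lia. }
  set (Hs := Rsum (Zseq 1 (2 * N)) (fun j => / IZR j)) in *.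
  assert (Hs <= 2 + ln (INR N)) by lra.
  nra.
Qed.
Open Scope R_scope.

Lemma ln_nonneg x : 1 <= x -> 0 <= ln x.
Proof.
  intros H1N. destruct (Rle_lt_or_eq_dec 1 x H1N) as [Hl|He].
  - rewrite <- ln_1. left. apply ln_increasing; lra.
  - rewrite <- He, ln_1. lra.
Qed.

Lemma Rpower_ge1 x e : 1 <= x -> 0 <= e -> 1 <= Rpower x e.
Proof.
  intros Hx He. unfold Rpower. pose proof (exp_ineq1_le (e * ln x)).
  pose proof (ln_nonneg x Hx). nra.
Qed.

Lemma final_ineq (N eps a b : R) : 1 <= N -> 0 < eps -> 0 <= a -> 0 <= b ->
  a * N + b * N * ln N <= (a + b / eps) * Rpower N (1 + eps).
Proof.
  intros HN He Ha Hb.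
  rewrite Rpower_plus, Rpower_1 by lra.
  pose proof (ln_le_pow N eps ltac:(lra) He) as Hl.
  pose proof (Rpower_ge1 N eps HN ltac:(lra)) as Hp.
  set (p := Rpower N eps) in *.
  assert (b * ln N <= b * (p / eps)) by (apply Rmult_le_compat_l; auto).
  assert (b * (p / eps) = b / eps * p) by (field; lra).
  assert (a * N <= a * N * p). { rewrite <- (Rmult_1_r (a*N)) at 1. apply Rmult_le_compat_l; nra. }
  assert (b * N * ln N <= N * (b / eps * p)).
  { replace (b * N * ln N) with (N * (b * ln N)) by ring. apply Rmult_le_compat_l; lra. }
  replace ((a + b / eps) * (N * p)) with (a * N * p + N * (b / eps * p)) by ring.
  lra.
Qed.

Close Scope Z_scope. Open Scope R_scope.
Theorem lemma4p2 :
  forall eps : R, 0 < eps ->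
  exists C : R, 0 < C /\
    forall N : nat, (1 <= N)%nat ->
      INR (count_box N (fun A B => is_rat_square (- (A * B))%Z))
        <= C * Rpower (INR N) (1 + eps)
      /\ forall D : Z, ~ is_int_square D ->
           INR (count_box N (fun A B =>
                  is_rat_square (D * ((A + B - 1) ^ 2 - 4 * A * B))%Z))
             <= C * Rpower (IZR (Z.abs D)) eps * Rpower (INR N) (1 + eps).
Proof.
  intros eps He. exists (135 + 60 / eps).
  assert (0 < 60 / eps) by (apply Rdiv_lt_0_compat; lra).
  split; [lra|]. intros N HN.
  assert (H1N : 1 <= INR N) by (apply (le_INR 1); lia).
  assert (HP : 0 <= Rpower (INR N) (1 + eps)) by (unfold Rpower; left; apply exp_pos).
  split.
  - eapply Rle_trans. apply part1_bound; auto.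
    eapply Rle_trans. apply (final_ineq (INR N) eps 8 2); lra.
    apply Rmult_le_compat_r; auto.
    assert (2 / eps <= 60 / eps) by (unfold Rdiv; apply Rmult_le_compat_r; [left; apply Rinv_0_lt_compat; lra|lra]).
    lra.
  - intros D HD.
    assert (HD0 : D <> 0%Z). { intro E. apply HD. exists 0%Z. lia. }
    destruct (part2_len N D HD) as [s [Hs Hl]].
    eapply Rle_trans. apply le_INR, Hl.
    eapply Rle_trans. apply part2_bound; auto.
    eapply Rle_trans. apply (final_ineq (INR N) eps 135 60); lra.
    assert (1 <= Rpower (IZR (Z.abs D)) eps).
    { apply Rpower_ge1; [|lra]. apply IZR_le. lia. }
    assert (0 <= (135 + 60 / eps) * Rpower (INR N) (1 + eps)) by (apply Rmult_le_pos; lra).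
    rewrite (Rmult_comm _ (Rpower (IZR (Z.abs D)) eps)), Rmult_assoc.
    nra.
Qed.
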